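(* Let $\mathcal M=\{A,B,C,D\}$ be a discrete-time model with $A\in\mathbb C^{n\times n}$, $B\in\mathbb C^{n\times m}$, $C\in\mathbb C^{m\times n}$, $D\in\mathbb C^{m\times m}$, and let $X\in\mathbb X^{\gg}(\mathcal M)$. For nonsingular $T\in\mathbb C^{n\times n}$ put $$G(T):=\operatorname{diag}(T,T^{-\mathsf H},I_m)\,\big(D_s\widehat W(X,\mathcal M)D_s\big)\,\operatorname{diag}(T^{\mathsf H},T^{-1},I_m).$$ Then the minimum of $\operatorname{trace} G(T)$ over all nonsingular $T$ is attained by the matrices $T$ with $X=T^{\mathsf H}T$, for which $G(T)=D_s\widehat W(I_n,\mathcal M_T)D_s$, so that $$\min_{\det T\neq 0}\operatorname{trace} G(T)=\operatorname{trace}\big(D_s\widehat W(I_n,\mathcal M_T)D_s\big)\quad (X=T^{\mathsf H}T),$$ while the determinant is invariant: $\det G(T)$ is the same for all nonsingular $T$, and in particular equals $\det\big(D_s\widehat W(I_n,\mathcal M_T)D_s\big)$ for $X=T^{\mathsf H}T$.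
   Context: $\mathbb H_n$ denotes the set of $n\times n$ Hermitian matrices; $Y>0$ ($Y\ge 0$) means positive definite (semidefinite). For $X\in\mathbb H_n$ define $$W(X,\mathcal M)=\begin{bmatrix} X-A^{\mathsf H}XA & C^{\mathsf H}-A^{\mathsf H}XB\\ C-B^{\mathsf H}XA & D^{\mathsf H}+D-B^{\mathsf H}XB\end{bmatrix},$$ and $\mathbb X^{\gg}(\mathcal M)=\{X\in\mathbb H_n: W(X,\mathcal M)>0,\ X>0\}$. For $X>0$ define $$\widehat W(X,\mathcal M)=\begin{bmatrix} X^{-1} & A & B\\ A^{\mathsf H} & X & C^{\mathsf H}\\ B^{\mathsf H} & C & D^{\mathsf H}+D\end{bmatrix},$$ $D_s=\operatorname{diag}(I_n,I_n,I_m/\sqrt2)$, and for nonsingular $T$ the transformed model $\mathcal M_T=\{TAT^{-1},TB,CT^{-1},D\}$. *)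

(* Defs.v *)
(* Complex scalars: an arbitrary numClosedFieldType
   (e.g. complex R = R[i] for a real closed field R), with conjugation ^*. *)
From HB Require Import structures.
From mathcomp Require Import all_boot all_order all_algebra.
Set Implicit Arguments. Unset Strict Implicit. Unset Printing Implicit Defensive.
Import Order.TTheory GRing.Theory Num.Theory.
Local Open Scope ring_scope.

Section Defs.
Variable K : numClosedFieldType.

Definition ctmx (p q : nat) (A : 'M[K]_(p, q)) : 'M[K]_(q, p) :=
  (map_mx Num.conj A)^T.

Definition hermitian (p : nat) (Y : 'M[K]_p) : Prop := ctmx Y = Y.

Definition posdef (p : nat) (Y : 'M[K]_p) : Prop :=
  hermitian Y /\ forall x : 'cV[K]_p, x != 0 -> 0 < (ctmx x *m Y *m x) 0 0.

Variables n m : nat.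

Definition Wmx (A : 'M[K]_n) (B : 'M[K]_(n, m)) (C : 'M[K]_(m, n)) (D : 'M[K]_m)
    (X : 'M[K]_n) : 'M[K]_(n + m) :=
  block_mx (X - ctmx A *m X *m A) (ctmx C - ctmx A *m X *m B)
           (C - ctmx B *m X *m A) (ctmx D + D - ctmx B *m X *m B).

Definition Xgg (A : 'M[K]_n) (B : 'M[K]_(n, m)) (C : 'M[K]_(m, n)) (D : 'M[K]_m)
    (X : 'M[K]_n) : Prop :=
  hermitian X /\ posdef (Wmx A B C D X) /\ posdef X.

(* \hat W(X, M), a 3x3 block matrix with block sizes n, n, m *)
Definition What (A : 'M[K]_n) (B : 'M[K]_(n, m)) (C : 'M[K]_(m, n)) (D : 'M[K]_m)
    (X : 'M[K]_n) : 'M[K]_(n + n + m) :=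
  block_mx (block_mx (invmx X) A (ctmx A) X) (col_mx B (ctmx C))
           (row_mx (ctmx B) C) (ctmx D + D).

Definition Ds : 'M[K]_(n + n + m) :=
  block_mx 1%:M 0 0 ((sqrtC 2)^-1)%:M.

Definition Lmx (T : 'M[K]_n) : 'M[K]_(n + n + m) :=
  block_mx (block_mx T 0 0 (ctmx (invmx T))) 0 0 1%:M.
Definition Rmx (T : 'M[K]_n) : 'M[K]_(n + n + m) :=
  block_mx (block_mx (ctmx T) 0 0 (invmx T)) 0 0 1%:M.

Definition Gmx (A : 'M[K]_n) (B : 'M[K]_(n, m)) (C : 'M[K]_(m, n)) (D : 'M[K]_m)
    (X T : 'M[K]_n) : 'M[K]_(n + n + m) :=
  Lmx T *m (Ds *m What A B C D X *m Ds) *m Rmx T.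

(* D_s \hat W(I_n, M_T) D_s with M_T = {T A T^-1, T B, C T^-1, D} *)
Definition GT_target (A : 'M[K]_n) (B : 'M[K]_(n, m)) (C : 'M[K]_(m, n))
    (D : 'M[K]_m) (T : 'M[K]_n) : 'M[K]_(n + n + m) :=
  Ds *m What (T *m A *m invmx T) (T *m B) (C *m invmx T) D 1%:M *m Ds.

End Defs.

(* Main.v *)
Require Import Defs.
From HB Require Import structures.
From mathcomp Require Import all_boot all_order all_algebra.
Import Order.TTheory GRing.Theory Num.Theory.
Local Open Scope ring_scope.
From mathcomp Require Import ring.


Section Helpers.
Context {K : numClosedFieldType}.

Lemma ctmxM p q r (A : 'M[K]_(p, q)) (B : 'M[K]_(q, r)) :
  ctmx (A *m B) = ctmx B *m ctmx A.
Proof. by rewrite /ctmx map_mxM trmx_mul. Qed.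

Lemma ctmxK p q (A : 'M[K]_(p, q)) : ctmx (ctmx A) = A.
Proof. by apply/matrixP=> i j; rewrite !mxE Num.Theory.conjCK. Qed.

Lemma ctmxD p q (A B : 'M[K]_(p, q)) : ctmx (A + B) = ctmx A + ctmx B.
Proof. by apply/matrixP=> i j; rewrite !mxE rmorphD. Qed.

Lemma ctmxN p q (A : 'M[K]_(p, q)) : ctmx (- A) = - ctmx A.
Proof. by apply/matrixP=> i j; rewrite !mxE rmorphN. Qed.

Lemma ctmx1 p : ctmx (1%:M : 'M[K]_p) = 1%:M.
Proof. by apply/matrixP=> i j; rewrite !mxE rmorph_nat eq_sym. Qed.

Lemma ctmx_inv p (T : 'M[K]_p) : ctmx (invmx T) = invmx (ctmx T).
Proof. by rewrite /ctmx map_invmx trmx_inv. Qed.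

Lemma ctmx_unit p (T : 'M[K]_p) : (ctmx T \in unitmx) = (T \in unitmx).
Proof. by rewrite /ctmx unitmx_tr map_unitmx. Qed.

Lemma det_ctmx p (T : 'M[K]_p) : \det (ctmx T) = Num.conj (\det T).
Proof. by rewrite /ctmx det_tr det_map_mx. Qed.

Lemma invmxM p (A B : 'M[K]_p) : A \in unitmx -> B \in unitmx ->
  invmx (A *m B) = invmx B *m invmx A.
Proof.
move=> Au Bu; have ABu : A *m B \in unitmx by rewrite unitmx_mul Au Bu.
rewrite -[RHS]mul1mx -(mulVmx ABu) -!mulmxA.
by rewrite [B *m _]mulmxA mulmxV // mul1mx mulmxV // mulmx1.
Qed.

Lemma tr_ctmx_ge0 {p} (Z : 'M[K]_p) : 0 <= \tr (ctmx Z *m Z).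
Proof.
rewrite /mxtrace; apply: sumr_ge0 => i _; rewrite mxE; apply: sumr_ge0 => j _.
by rewrite !mxE mulrC mul_conjC_ge0.
Qed.

End Helpers.


Section Main.
Context {K : numClosedFieldType} {n m : nat}.
Context {A : 'M[K]_n} {B : 'M[K]_(n, m)} {C : 'M[K]_(m, n)} {D : 'M[K]_m}.

Lemma LWR (X T : 'M[K]_n) :
  Lmx m T *m What A B C D X *m Rmx m T =
  block_mx (block_mx (T *m invmx X *m ctmx T) (T *m A *m invmx T)
                     (ctmx (invmx T) *m ctmx A *m ctmx T) (ctmx (invmx T) *m X *m invmx T))
           (col_mx (T *m B) (ctmx (invmx T) *m ctmx C))
           (row_mx (ctmx B *m ctmx T) (C *m invmx T)) (ctmx D + D).
Proof.
rewrite /Lmx /What /Rmx !mulmx_block !mul0mx !mulmx0 !addr0 !add0r !mul1mx !mulmx1.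
by rewrite !mulmx_block mul_block_col mul_row_block !mul0mx !mulmx0 !addr0 !add0r.
Qed.

Lemma Gmx_eq (X T : 'M[K]_n) :
  Gmx A B C D X T = Ds K n m *m (Lmx m T *m What A B C D X *m Rmx m T) *m Ds K n m.
Proof.
have e1 : Lmx m T *m Ds K n m = Ds K n m *m Lmx m T.
  by rewrite /Lmx /Ds !mulmx_block !mul0mx !mulmx0 !addr0 !add0r !mul1mx !mulmx1.
have e2 : Ds K n m *m Rmx m T = Rmx m T *m Ds K n m.
  by rewrite /Rmx /Ds !mulmx_block !mul0mx !mulmx0 !addr0 !add0r !mul1mx !mulmx1.
rewrite /Gmx !mulmxA e1 -!mulmxA e2 !mulmxA //.
Qed.

Lemma tr_Ds (M11 : 'M[K]_(n + n)) M12 M21 (M22 : 'M[K]_m) :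
  \tr (Ds K n m *m block_mx M11 M12 M21 M22 *m Ds K n m) =
  \tr M11 + \tr ((sqrtC 2)^-1%:M *m M22 *m (sqrtC 2)^-1%:M).
Proof.
rewrite /Ds !mulmx_block !mul0mx !mulmx0 !addr0 !add0r !mul1mx !mulmx1.
by rewrite mxtrace_block.
Qed.


Lemma det_Gmx (X T : 'M[K]_n) : T \in unitmx ->
  \det (Gmx A B C D X T) = \det (Ds K n m *m What A B C D X *m Ds K n m).
Proof.
move=> Tu.
have hL : \det (Lmx m T) * \det (Rmx m T) = 1.
  rewrite /Lmx /Rmx !det_ublock !det1 !mulr1 !det_ctmx !det_inv fmorphV.
  have d0 : \det T != 0 by rewrite -unitfE -unitmxE.
  have c0 : Num.conj (\det T) != 0 by rewrite conjC_eq0.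
  move: d0 c0; set d := \det T; set c := Num.conj d => d0 c0.
  rewrite mulrA mulrAC -(mulrA d); change (d * (c^-1 / d) * c = 1).
  by rewrite mulrCA mulfV // mulr1 mulVf.
by rewrite /Gmx !det_mulmx mulrAC hL mul1r.
Qed.

Lemma part2 (X T : 'M[K]_n) : T \in unitmx -> ctmx T *m T = X ->
  Gmx A B C D X T = GT_target A B C D T.
Proof.
move=> Tu XT; rewrite Gmx_eq LWR /GT_target /What; congr (_ *m _ *m _).
rewrite invmx1 -XT invmxM ?ctmx_unit // !ctmxM ctmx_inv !mulmxA mulmxV // mul1mx.
rewrite -ctmx_inv -[ctmx (invmx T) *m ctmx T]ctmxM mulmxV // ctmx1 mul1mx mulmxV //.
Qed.


Lemma part3 (X T T' : 'M[K]_n) : T \in unitmx -> ctmx T *m T = X -> T' \in unitmx ->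
  \tr (GT_target A B C D T) <= \tr (Gmx A B C D X T').
Proof.
move=> Tu XT T'u.
rewrite Gmx_eq LWR /GT_target /What !tr_Ds !mxtrace_block invmx1 lerD2r.
set M := T *m invmx T'; set N := T' *m invmx T.
have e1 : T' *m invmx X *m ctmx T' = N *m ctmx N.
  by rewrite -XT invmxM ?ctmx_unit // /N !ctmxM ctmx_inv !mulmxA.
have e2 : ctmx (invmx T') *m X *m invmx T' = ctmx M *m M.
  by rewrite -XT /M !ctmxM !mulmxA.
have MN : M *m N = 1%:M.
  by rewrite /M /N mulmxA -(mulmxA T) mulVmx // mulmx1 mulmxV.
rewrite e1 e2.
have h := tr_ctmx_ge0 (ctmx M - N).
rewrite ctmxD ctmxN ctmxK mulmxDl mulmxDr mulmxDr !mulNmx !mulmxN -ctmxM MN ctmx1 in h.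
rewrite !mxtraceD !raddfN /= in h.
rewrite -subr_ge0; move: h.
rewrite (mxtrace_mulC M) (mxtrace_mulC (ctmx N)).
set a := \tr (ctmx M *m M); set b := \tr (N *m ctmx N); set t := \tr 1%:M.
have -> : a - t + (- t - - b) = b + a - (t + t) by ring.
by [].
Qed.


Lemma part1 (X : 'M[K]_n) : Defs.hermitian X -> Defs.posdef X ->
  exists T : 'M[K]_n, T \in unitmx /\ ctmx T *m T = X.
Proof.
move=> hX [_ pX].
have Xst : ctmx X = X := hX.
have Xn : X \is normalmx.
  by apply/normalmxP; rewrite -map_trmx -/(ctmx X) Xst.
set P := spectralmx X; set d := spectral_diag X.
have eX : X = invmx P *m diag_mx d *m P by apply/orthomx_spectralP.
have Pu : P \in unitmx := spectral_unit X.
have Pinv : invmx P = ctmx P by rewrite invmx_unitary ?spectral_unitarymx // /ctmx map_trmx.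
have dpos : forall j, 0 < d 0 j.
  move=> j; set e : 'cV[K]_n := delta_mx j 0.
  have e0 : e != 0.
    apply/eqP => /matrixP /(_ j 0); rewrite !mxE !eqxx /= => /eqP; by rewrite oner_eq0.
  have x0 : ctmx P *m e != 0.
    apply: contra e0 => /eqP h; apply/eqP.
    by rewrite -(mulKmx (_ : ctmx P \in unitmx) e) ?ctmx_unit // h mulmx0.
  have := pX _ x0.
  have ce : ctmx e = delta_mx 0 j.
    by apply/matrixP=> a b; rewrite !mxE rmorph_nat andbC.
  rewrite eX Pinv !ctmxM ctmxK ce !mulmxA -[delta_mx 0 j *m P *m ctmx P]mulmxA -Pinv mulmxV // mulmx1.

  rewrite -[_ *m P *m invmx P]mulmxA mulmxV // mulmx1.
  have -> : delta_mx 0 j *m diag_mx d = d 0 j *: (delta_mx 0 j : 'rV[K]_n).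
    apply/matrixP=> a b; rewrite mul_mx_diag !mxE.
    by case: (eqVneq j b) => [->|]; rewrite ?andbT ?andbF ?mulr0 ?mul0r // mulrC.
  by rewrite -scalemxAl mul_delta_mx !mxE !eqxx mulr1.
set s : 'rV[K]_n := map_mx sqrtC d.
have sge0 : forall j, 0 <= s 0 j by move=> j; rewrite mxE sqrtC_ge0 ltW.
exists (diag_mx s *m P); split.
  rewrite unitmx_mul Pu andbT unitmxE det_diag unitfE.
  by apply/prodf_neq0 => j _; rewrite mxE sqrtC_eq0 gt_eqF.
have cs : ctmx (diag_mx s) = diag_mx s.
  apply/matrixP=> a b; rewrite !mxE.
  case: (eqVneq a b) => [->|nab]; last by rewrite !mulr0n rmorph0.
  by rewrite !mulr1n geC0_conj // sqrtC_ge0 ltW.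
rewrite ctmxM cs -Pinv eX -!mulmxA; congr (_ *m _); rewrite !mulmxA mulmx_diag; congr (_ *m _).
congr diag_mx; apply/rowP => j; rewrite !mxE -expr2 sqrtCK //.
Qed.

End Main.

Theorem lemma4p5 (K : numClosedFieldType) (n m : nat)
    (A : 'M[K]_n) (B : 'M[K]_(n, m)) (C : 'M[K]_(m, n)) (D : 'M[K]_m)
    (X : 'M[K]_n) :
  Xgg A B C D X ->
  (* factorizations X = T^H T exist (so the minimum below is attained) *)
  (exists T : 'M[K]_n, T \in unitmx /\ ctmx T *m T = X) /\
  (* for X = T^H T : G(T) = D_s \hat W(I_n, M_T) D_s *)
  (forall T : 'M[K]_n, T \in unitmx -> ctmx T *m T = X ->
     Gmx A B C D X T = GT_target A B C D T) /\
  (* such T minimize trace G over all nonsingular T *)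
  (forall T T' : 'M[K]_n, T \in unitmx -> ctmx T *m T = X -> T' \in unitmx ->
     \tr (GT_target A B C D T) <= \tr (Gmx A B C D X T')) /\
  (* det G(T) is independent of the nonsingular T ... *)
  (forall T T' : 'M[K]_n, T \in unitmx -> T' \in unitmx ->
     \det (Gmx A B C D X T) = \det (Gmx A B C D X T')) /\
  (* ... and equals det(D_s \hat W(I_n, M_T) D_s) for X = T^H T *)
  (forall T T' : 'M[K]_n, T \in unitmx -> ctmx T *m T = X -> T' \in unitmx ->
     \det (Gmx A B C D X T') = \det (GT_target A B C D T)).
Proof.
move=> [hX [_ pX]].
have [T0 [T0u XT0]] := part1 X hX pX.
split; first by exists T0.
split; first by move=> T Tu XT; exact: part2.
split; first by move=> T T' Tu XT T'u; exact: part3.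
split; first by move=> T T' Tu T'u; rewrite !det_Gmx.
by move=> T T' Tu XT T'u; rewrite -(part2 X T Tu XT) !det_Gmx.
Qed.
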